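(* Let $\mathcal C$ be a concept hierarchy with maximum level $2$ and let $\mathcal N$ be a network with maximum layer $1$ (with fixed weights, all engaged flags always $0$). Let $r_1,r_2$ satisfy: $0\le r_1\le r_2\le1$; $r_1k$ is not an integer; $(r_2')^2\le 2r_1'-(r_1')^2$, where $r_1'k=\lfloor r_1k\rfloor$ and $r_2'k=\lceil r_2k\rceil$. Then $\mathcal N$ does not $(r_1,r_2)$-recognize $\mathcal C$ in the sense of Assumptions 1–3.
   Context: Data model. Fix positive integers $\ell_{max},n,k$. A universal set $D$ of concepts is partitioned into disjoint $D_0,\dots,D_{\ell_{max}}$ with $|D_0|=n$. A concept hierarchy with maximum level $\ell_{max}$ consists of $C\subseteq D$ and $children$: with $C_\ell=C\cap D_\ell$, each $c\in C_\ell$ ($\ell\ge1$) has $children(c)\subseteq C_{\ell-1}$ of size $k$; $|C_{\ell_{max}}|=k$; distinct concepts on the same level have disjoint children sets. $leaves(c)$ is the set of level-$0$ descendants of $c$ (descendants: $c$ itself and, recursively, children of descendants). For $B\subseteq D_0$ and $r\in[0,1]$: $B_0=B\cap C_0$, $B_\ell=\{c\in C_\ell:|children(c)\cap B_{\ell-1}|\ge rk\}$, $supported_r(B)=\bigcup_\ell B_\ell$. Network model. Layers $N_0,\dots,N_{\ell'_{max}}$ of $n$ neurons each; every neuron of $N_\ell$ has an edge to every neuron of $N_{\ell+1}$, no other edges; bijection $rep:D_0\to N_0$. Each edge $(v,u)$ has a fixed weight in $[0,1]$ and each non-input neuron has a threshold $\tau$; discrete time; input firing is set externally; a non-input neuron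 $u$ fires at time $t$ iff $\sum_v weight(v,u)y^v(t-1)\ge\tau$, the sum over neurons $v$ of the layer below. $B\subseteq D_0$ is presented at time $t$ if the input neurons firing at time $t$ are exactly $rep(B)$. Assumptions: (1) every concept $c\in C$ has a unique designated neuron $rep(c)$ (for level-$0$ concepts the input neuron $rep(c)$; for concepts of level $\ge1$ a non-input neuron, in any layer); (2) for every $B\subseteq C_0$ presented at time $t$, if $c\in supported_{r_2}(B)$ then $rep(c)$ fires at time $t+layer(rep(c))$; (3) for every $B\subseteq C_0$ presented at time $t$, if $c\notin supported_{r_1}(B)$ then $rep(c)$ does not fire at time $t+layer(rep(c))$. *)

(* Defs.v *)
From HB Require Import structures.
From mathcomp Require Import all_boot all_order all_algebra.
From mathcomp Require Import reals.
Set Implicit Arguments. Unset Strict Implicit. Unset Printing Implicit Defensive.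
Import Order.TTheory GRing.Theory Num.Theory.
Local Open Scope ring_scope.

Section Hierarchy.
Variables (D : finType) (lvl : D -> nat).

Definition Dlev (l : nat) : {set D} := [set d | lvl d == l].

Definition is_hierarchy (n lmax k : nat) (C : {set D}) (children : D -> {set D}) : Prop :=
  [/\ (forall d : D, (lvl d <= lmax)%N),
      #|Dlev 0| = n,
      (forall c, c \in C -> (1 <= lvl c <= lmax)%N ->
         children c \subset C :&: Dlev (lvl c).-1 /\ #|children c| = k),
      #|C :&: Dlev lmax| = k &
      (forall c c', c \in C -> c' \in C -> (1 <= lvl c)%N -> lvl c = lvl c' ->
         c != c' -> [disjoint children c & children c'])].

Variable R : realType.
Variables (k : nat) (C : {set D}) (children : D -> {set D}).

Fixpoint Blev (r : R) (B : {set D}) (l : nat) : {set D} :=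
  match l with
  | 0 => B :&: (C :&: Dlev 0)
  | l'.+1 => [set c in C :&: Dlev l'.+1 |
               r * k%:R <= (#|children c :&: Blev r B l'|)%:R]
  end.

Definition supported (lmax : nat) (r : R) (B : {set D}) : {set D} :=
  \bigcup_(l < lmax.+1) Blev r B l.

End Hierarchy.

Section Network.
Variables (R : realType) (n L : nat).
(* Neurons are pairs (layer, index) with layer <= L, index : 'I_n.
   w l i j = weight of the edge from neuron (l,i) to neuron (l+1,j);
   tau l j = threshold of the non-input neuron (l,j), 1 <= l <= L.
   An execution y t l i = whether neuron (l,i) fires at time t. *)
Variables (w : nat -> 'I_n -> 'I_n -> R) (tau : nat -> 'I_n -> R).

Definition weights_ok : Prop :=
  forall l i j, (l < L)%N -> 0 <= w l i j <= 1.

Definition is_execution (y : nat -> nat -> 'I_n -> bool) : Prop :=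
  forall t l j, (1 <= l <= L)%N ->
    y t.+1 l j = (tau l j <= \sum_(i < n) w l.-1 i j * (y t l.-1 i)%:R).

End Network.

Section Recognition.
Variables (R : realType) (n L : nat) (w : nat -> 'I_n -> 'I_n -> R) (tau : nat -> 'I_n -> R).
Variables (D : finType) (lvl : D -> nat) (lmax k : nat) (C : {set D}) (children : D -> {set D}).
(* rep d = (layer, index) of the neuron representing concept d. *)
Variable rep : D -> nat * 'I_n.

Definition input_rep_ok : Prop :=
  [/\ (forall d, d \in Dlev lvl 0 -> (rep d).1 = 0%N),
      {in Dlev lvl 0 &, injective (fun d => (rep d).2)} &
      (forall i : 'I_n, exists2 d, d \in Dlev lvl 0 & (rep d).2 = i)].

Definition presented (y : nat -> nat -> 'I_n -> bool) (t : nat) (B : {set D}) : Prop :=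
  forall i : 'I_n, y t 0%N i = (i \in [set (rep d).2 | d in B]).

Definition assumption1 : Prop :=
  forall c, c \in C -> (1 <= lvl c)%N -> (1 <= (rep c).1 <= L)%N.

Definition assumption2 (r2 : R) : Prop :=
  forall y, is_execution L w tau y -> forall t (B : {set D}),
    B \subset C :&: Dlev lvl 0 -> presented y t B ->
    forall c, c \in C -> c \in supported lvl k C children lmax r2 B ->
      y (t + (rep c).1)%N (rep c).1 (rep c).2.

Definition assumption3 (r1 : R) : Prop :=
  forall y, is_execution L w tau y -> forall t (B : {set D}),
    B \subset C :&: Dlev lvl 0 -> presented y t B ->
    forall c, c \in C -> c \notin supported lvl k C children lmax r1 B ->
      ~~ y (t + (rep c).1)%N (rep c).1 (rep c).2.

Definition recognizes (r1 r2 : R) : Prop :=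
  [/\ assumption1, assumption2 r2 & assumption3 r1].

End Recognition.

(* Main.v *)
Require Import Defs.
From HB Require Import structures.
From mathcomp Require Import all_boot all_order all_algebra.
From mathcomp Require Import reals.
From mathcomp Require Import ring lra.
Import Order.TTheory GRing.Theory Num.Theory.
Local Open Scope ring_scope.

Lemma exists_max (R : realType) (T : finType) (f : T -> R) (X : {set T}) :
  X != set0 -> exists2 x, x \in X & forall y, y \in X -> f y <= f x.
Proof.
case/set0Pn => x0 Hx0.
case: (@arg_maxP _ _ T x0 (mem X) f Hx0) => x Hx Hmax.
by exists x.
Qed.

Lemma avg_sub (R : realType) (T : finType) (f : T -> R) (N : nat) :
  forall (X : {set T}) m, #|X| = N -> (m <= N)%N ->
  exists2 Y : {set T}, Y \subset X &
    (#|Y| = m /\ N%:R * \sum_(i in Y) f i <= m%:R * \sum_(i in X) f i).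
Proof.
elim: N => [|N IH] X m HX Hm.
  have -> : m = 0%N by apply/eqP; rewrite -leqn0.
  exists set0; first exact: sub0set.
  by rewrite cards0 !mul0r.
have [->|Hm0] := eqVneq m 0%N.
  exists set0; first exact: sub0set.
  by rewrite cards0 big_set0 mulr0 mul0r.
have [Em|HmN] := eqVneq m N.+1.
  exists X => //; by rewrite HX Em.
have XN0 : X != set0 by apply/negP => /eqP E; rewrite E cards0 in HX.
have [x Hx Hmax] := @exists_max R T f X XN0.
have HX' : #|X :\ x| = N by rewrite (cardsD1 x X) Hx in HX; case: HX.
have HmN' : (m <= N)%N by rewrite -ltnS ltn_neqAle HmN Hm.
have [Y HY [cY Hs]] := IH (X :\ x) m HX' HmN'.
exists Y; first exact: (subset_trans HY (subsetDl _ _)).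
split => //.
rewrite (big_setD1 x Hx) /=.
set S := \sum_(i in X :\ x) f i in Hs *.
set s := \sum_(i in Y) f i in Hs *.
have Hfx : S <= N%:R * f x.
  rewrite -[N in N%:R]HX' -sum1_card natr_sum mulr_suml.
  by apply: ler_sum => i; rewrite inE => /andP[_ Hi]; rewrite mul1r Hmax.
have N0 : (0 < N)%N by apply: leq_trans HmN'; rewrite lt0n.
have HN : (0:R) < N%:R by rewrite ltr0n.
have Hm0' : (0:R) <= m%:R by [].
rewrite -(ler_pM2l HN).
have: N%:R * (N%:R * s) <= N%:R * (m%:R * S) by rewrite ler_pM2l.
have: m%:R * S <= m%:R * (N%:R * f x) by rewrite ler_wpM2l.
rewrite -!natr1; nra.
Qed.

Lemma final_ineq (R : realType) (k a b W Sn SA Sp SumP : R) :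
  0 < k -> 0 <= a -> a <= k -> 0 <= b -> 0 <= W -> b ^+ 2 <= 2 * a * k - a ^+ 2 ->
  a * W <= k * Sn -> a * (W - Sn) <= k * SA ->
  k * Sp <= b * SumP -> k * SumP <= b * W -> Sp <= Sn + SA.
Proof.
move=> k0 a0 ak b0 W0 hab h1 h2 h3 h4.
have e1 : k * (k * Sp) <= b * b * W.
  apply: le_trans (_ : k * (b * SumP) <= _); first by rewrite ler_pM2l.
  by rewrite mulrCA -mulrA ler_wpM2l.
have e2 : b * b * W <= (2 * a * k - a ^+ 2) * W by rewrite ler_wpM2r // -expr2.
have e3 : (k - a) * (a * W) <= (k - a) * (k * Sn) by rewrite ler_wpM2l // subr_ge0.
have e4 : k * (a * (W - Sn)) <= k * (k * SA) by rewrite ler_wpM2l // ltW.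
have e5 : k * (k * Sp) <= k * (k * (Sn + SA)) by nra.
by rewrite -(ler_pM2l k0) -(ler_pM2l k0).
Qed.


Definition pickset (R : realType) (T : finType) (X : {set T}) (m : nat) (f : T -> R) : {set T} :=
  odflt set0 [pick Y : {set T} | [&& Y \subset X, #|Y| == m &
     #|X|%:R * \sum_(i in Y) f i <= m%:R * \sum_(i in X) f i]].
Arguments pickset {R T}.

Lemma picksetP (R : realType) (T : finType) (X : {set T}) (m : nat) (f : T -> R) :
  (m <= #|X|)%N ->
  [/\ pickset X m f \subset X, #|pickset X m f| = m &
     #|X|%:R * \sum_(i in pickset X m f) f i <= m%:R * \sum_(i in X) f i].
Proof.
move=> Hm; rewrite /pickset; case: pickP => [Y /and3P[h1 /eqP h2 h3]|none] //=.
exfalso; have [Y h1 [h2 h3]] := @avg_sub R T f #|X| X m erefl Hm.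
by have := none Y; rewrite h1 h2 eqxx h3.
Qed.

Theorem mainTheorem3 (R : realType) (n k : nat) (D : finType) (lvl : D -> nat)
    (C : {set D}) (children : D -> {set D}) (r1 r2 : R)
    (w : nat -> 'I_n -> 'I_n -> R) (tau : nat -> 'I_n -> R) (rep : D -> nat * 'I_n) :
  (0 < n)%N -> (0 < k)%N ->
  is_hierarchy lvl n 2 k C children ->
  0 <= r1 -> r1 <= r2 -> r2 <= 1 ->
  r1 * k%:R \isn't a Num.int ->
  let r1' : R := (Num.floor (r1 * k%:R))%:~R / k%:R in
  let r2' : R := (Num.ceil (r2 * k%:R))%:~R / k%:R in
  r2' ^+ 2 <= 2 * r1' - r1' ^+ 2 ->
  weights_ok 1 w ->
  input_rep_ok lvl rep ->
  ~ recognizes 1 w tau lvl 2 k C children rep r1 r2.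
Proof.
move=> n0 k0 H r1ge0 r12 r2le1 Hnint r1' r2' Hineq Hw [Hr0 Hrinj Hrsurj] [A1 A2 A3].
case: H => Hlv Hn0 Hch Hk2 Hdisj.
have inD : forall d l, (d \in Dlev lvl l) = (lvl d == l) by move=> d l; rewrite inE.
have kpos : (0 : R) < k%:R by rewrite ltr0n.
have [an Ean] : exists an : nat, Num.floor (r1 * k%:R) = an%:Z.
  exists `|Num.floor (r1 * k%:R)|%N; rewrite gez0_abs // floor_ge0.
  by apply: mulr_ge0 => //; apply: ltW.
have [bn Ebn] : exists bn : nat, Num.ceil (r2 * k%:R) = bn%:Z.
  exists `|Num.ceil (r2 * k%:R)|%N; rewrite gez0_abs // ceil_ge0.
  apply: lt_le_trans (_ : 0 <= _); first by rewrite ltrN10.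
  by apply: mulr_ge0 => //; apply: le_trans r12.
have an_lt : an%:R < r1 * k%:R.
  have := floor_le (r1 * k%:R); rewrite Ean le_eqVlt => /orP[/eqP E|//].
  by move: Hnint; rewrite intrEfloor Ean E eqxx.
have bn_ge : r2 * k%:R <= bn%:R by have := ceil_ge (r2 * k%:R); rewrite Ebn.
have bn_le : (bn <= k)%N.
  rewrite -lez_nat -Ebn ceil_le_int /=.
  by rewrite -[X in _ <= X]mul1r ler_wpM2r // ltW.
have an_le : (an <= k)%N.
  rewrite -(ler_nat R); apply: ltW; apply: lt_le_trans an_lt _.
  have r11 : r1 <= 1 := le_trans r12 r2le1.
  by rewrite -[X in _ <= X]mul1r ler_wpM2r // ltW.
have hab : (bn%:R : R) ^+ 2 <= 2 * an%:R * k%:R - an%:R ^+ 2.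
  move: Hineq; rewrite /r1' /r2' Ean Ebn /=.
  set x := an%:R; set y := bn%:R; set kk := k%:R.
  move=> h.
  have E1 : y ^+ 2 = (y / kk) ^+ 2 * kk ^+ 2.
    by rewrite -exprMn divfK // gt_eqF.
  have E2 : 2 * x * kk - x ^+ 2 = (2 * (x / kk) - (x / kk) ^+ 2) * kk ^+ 2.
    by field; rewrite gt_eqF.
  by rewrite E1 E2 ler_wpM2r // exprn_ge0 // ltW.
have : (0 < #|C :&: Dlev lvl 2|)%N by rewrite Hk2.
case/card_gt0P => c; rewrite inE inD => /andP[cC /eqP lc].
have [Kc cardK] : children c \subset C :&: Dlev lvl 1 /\ #|children c| = k.
  by have := Hch c cC; rewrite lc; apply.
set K := children c in Kc cardK.
have Kin : forall q, q \in K -> q \in C /\ lvl q = 1%N.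
  by move=> q /(subsetP Kc); rewrite inE inD => /andP[-> /eqP].
have Kch : forall q, q \in K -> children q \subset C :&: Dlev lvl 0 /\ #|children q| = k.
  by move=> q /Kin [qC lq]; have := Hch q qC; rewrite lq; apply.
have Kdisj : forall q q', q \in K -> q' \in K -> q != q' ->
    [disjoint children q & children q'].
  move=> q q' /Kin[qC lq] /Kin[q'C lq'] ne; apply: Hdisj => //; by rewrite ?lq ?lq'.
case Erc : (rep c) => [lr j].
have lr1 : lr = 1%N.
  have := A1 c cC; rewrite lc Erc /= => /(_ isT) /andP[h1 h2].
  by apply/eqP; rewrite eqn_leq h1 h2.
subst lr.
pose a d := w 0%N (rep d).2 j.
have a0 : forall d, 0 <= a d by move=> d; case/andP: (Hw 0%N (rep d).2 j isT).
pose fire (B : {set D}) := tau 1%N j <= \sum_(d in B) a d.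
have firing : forall B : {set D}, B \subset C :&: Dlev lvl 0 ->
   (c \in supported lvl k C children 2 r2 B -> fire B) /\
   (c \notin supported lvl k C children 2 r1 B -> ~ fire B).
  move=> B HB.
  pose S := [set (rep d).2 | d in B].
  pose y (t l : nat) (i : 'I_n) := if l == 0%N then i \in S else
     (tau l i <= \sum_(i' < n) w l.-1 i' i * (i' \in S)%:R).
  have ex : is_execution 1 w tau y.
    move=> t l j' /andP[h1 h2]; have -> : l = 1%N by apply/eqP; rewrite eqn_leq h1 h2.
    by [].
  have pres : presented rep y 0 B by move=> i.
  have Esum : \sum_(i' < n) w 0%N i' j * (i' \in S)%:R = \sum_(d in B) a d.
    have -> : \sum_(d in B) a d = \sum_(i in S) w 0%N i j.
      rewrite big_imset //= => x y' xB yB; apply: Hrinj.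
        by move: (subsetP HB x xB); rewrite inE => /andP[].
      by move: (subsetP HB y' yB); rewrite inE => /andP[].
    rewrite [RHS]big_mkcond /=; apply: eq_bigr => i _.
    by case: (i \in S); rewrite ?mulr1 ?mulr0.
  split.
    by move=> Hs; have := A2 y ex 0%N B HB pres c cC Hs; rewrite Erc /= /fire -Esum.
  by move=> Hs; have := A3 y ex 0%N B HB pres c cC Hs; rewrite Erc /= /fire -Esum => /negP.
have BlevS : forall (r : R) (B : {set D}) l d,
    (d \in Blev lvl k C children r B l.+1) =
    (d \in C :&: Dlev lvl l.+1) &&
      (r * k%:R <= #|children d :&: Blev lvl k C children r B l|%:R).
  by move=> r B l d; rewrite [in LHS]inE.
have Blev_lvl : forall (r : R) (B : {set D}) l d,
    d \in Blev lvl k C children r B l -> lvl d = l.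
  move=> r B [|l] d; first by rewrite /= !inE => /andP[_ /andP[_ /eqP]].
  by rewrite BlevS !inE => /andP[/andP[_ /eqP]].
have union : forall F : D -> {set D},
  (forall q, q \notin K -> F q = set0) -> (forall q, q \in K -> F q \subset children q) ->
  [/\ \bigcup_q F q \subset C :&: Dlev lvl 0,
      forall (r : R) q, q \in K ->
        children q :&: Blev lvl k C children r (\bigcup_q F q) 0 = F q &
      \sum_(d in \bigcup_q F q) a d = \sum_(q in K) \sum_(d in F q) a d].
  move=> F F0 Fsub.
  have FdisJ : forall q q', q != q' -> [disjoint F q & F q'].
    move=> q q' ne.
    case qK: (q \in K); last first.
      by rewrite F0 ?qK // disjoints_subset sub0set.
    case q'K: (q' \in K); last first.
      by rewrite (F0 q') ?q'K // disjoint_sym disjoints_subset sub0set.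
    apply: disjointWl (Fsub q qK) _; apply: disjointWr (Fsub q' q'K) _; exact: Kdisj.
  have HB : \bigcup_q F q \subset C :&: Dlev lvl 0.
    apply/subsetP => d /bigcupP [q _ dq].
    case qK: (q \in K); last by move: dq; rewrite F0 ?qK // inE.
    have [h _] := Kch q qK; exact: (subsetP h d (subsetP (Fsub q qK) d dq)).
  split => //.
    move=> r q qK /=; apply/eqP; rewrite eqEsubset; apply/andP; split.
      apply/subsetP => d; rewrite !inE => /andP[dch /andP[/bigcupP[q' _ dq'] _]].
      case: (eqVneq q q') => [->//|ne].
      case q'K: (q' \in K); last by move: dq'; rewrite F0 ?q'K // inE.
      have := Kdisj q q' qK q'K ne.
      by move/disjointFr/(_ dch); rewrite (subsetP (Fsub q' q'K) d dq').
    apply/subsetP => d dF.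
    have dB : d \in \bigcup_q F q by apply/bigcupP; exists q.
    have := subsetP HB d dB; rewrite !inE => /andP[-> ->].
    by rewrite (subsetP (Fsub q qK) d dF) dB.
  rewrite partition_disjoint_bigcup //.
  rewrite [RHS]big_mkcond /=; apply: eq_bigr => q _.
  by case: ifP => // qK; rewrite F0 ?qK // big_set0.
have cnt : forall F : D -> {set D},
  (forall q, q \notin K -> F q = set0) -> (forall q, q \in K -> F q \subset children q) ->
  forall (r : R) q, q \in K ->
    (q \in Blev lvl k C children r (\bigcup_q F q) 1) = (r * k%:R <= #|F q|%:R).
  move=> F F0 Fsub r q qK; have [_ E _] := union F F0 Fsub.
  have [qC lq] := Kin q qK.
  by rewrite BlevS E // inE qC inD lq.
pose Wq q := \sum_(d in children q) a d.
pose Pk q := pickset (children q) bn a.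
pose Nk q := pickset (children q) an (fun d => - a d).
pose p q := \sum_(d in Pk q) a d.
pose nq q := \sum_(d in Nk q) a d.
have PkP : forall q, q \in K -> [/\ Pk q \subset children q, #|Pk q| = bn &
    k%:R * p q <= bn%:R * Wq q].
  move=> q qK; have [_ cq] := Kch q qK.
  have := @picksetP R D (children q) bn a; rewrite cq => /(_ bn_le).
  by case=> h1 h2 h3; split.
have NkP : forall q, q \in K -> [/\ Nk q \subset children q, #|Nk q| = an &
    an%:R * Wq q <= k%:R * nq q].
  move=> q qK; have [_ cq] := Kch q qK.
  have := @picksetP R D (children q) an (fun d => - a d); rewrite cq => /(_ an_le).
  case=> h1 h2 h3; split => //.
  by move: h3; rewrite !sumrN !mulrN lerN2.
pose Q := pickset K bn p.
pose A := pickset K an (fun q => - (Wq q - nq q)).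
have [QK cQ HQ] : [/\ Q \subset K, #|Q| = bn & k%:R * \sum_(q in Q) p q <= bn%:R * \sum_(q in K) p q].
  by have := @picksetP R D K bn p; rewrite cardK => /(_ bn_le).
have [AK cA HA] : [/\ A \subset K, #|A| = an &
    an%:R * \sum_(q in K) (Wq q - nq q) <= k%:R * \sum_(q in A) (Wq q - nq q)].
  have := @picksetP R D K an (fun q => - (Wq q - nq q)); rewrite cardK => /(_ an_le).
  by case=> h1 h2 h3; split => //; move: h3; rewrite !sumrN !mulrN lerN2.
pose Fp q := if q \in Q then Pk q else set0.
pose Fn q := if q \in K then (if q \in A then children q else Nk q) else set0.
have Fp0 : forall q, q \notin K -> Fp q = set0.
  move=> q qK; rewrite /Fp; case: ifP => // qQ.
  by move: qK; rewrite (subsetP QK q qQ).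
have Fpsub : forall q, q \in K -> Fp q \subset children q.
  move=> q qK; rewrite /Fp; case: ifP => _; last exact: sub0set.
  by case: (PkP q qK).
have Fn0 : forall q, q \notin K -> Fn q = set0.
  by move=> q qK; rewrite /Fn (negbTE qK).
have Fnsub : forall q, q \in K -> Fn q \subset children q.
  move=> q qK; rewrite /Fn qK; case: ifP => _; first exact: subxx.
  by case: (NkP q qK).
have [HBp _ Sump] := union Fp Fp0 Fpsub.
have [HBn _ Sumn] := union Fn Fn0 Fnsub.
have [firep _] := firing _ HBp.
have [_ firen] := firing _ HBn.
have Hfp : fire (\bigcup_q Fp q).
  apply: firep; apply/bigcupP; exists (@Ordinal 3 2 isT) => //=.
  rewrite BlevS inE cC inD lc /=.
  apply: (le_trans bn_ge); rewrite ler_nat -cQ; apply: subset_leq_card.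
  apply/subsetP => q qQ; have qK := subsetP QK q qQ.
  rewrite inE qK (cnt Fp Fp0 Fpsub r2 q qK) /Fp qQ.
  apply: le_trans bn_ge _.
  by case: (PkP q qK) => _ -> _.
apply: firen (_ : c \notin _) _.
  apply/bigcupP => -[l _ Hl]; have := Blev_lvl _ _ _ _ Hl; rewrite lc.
  case: l Hl => [[|[|[|l']]] Hl3] //= Hl _.
  move: Hl; rewrite BlevS => /andP[_ Hl].
  have : (#|K :&: Blev lvl k C children r1 (\bigcup_q Fn q) 1| <= an)%N.
    rewrite -cA; apply: subset_leq_card; apply/subsetP => q; rewrite inE => /andP[qK].
    rewrite (cnt Fn Fn0 Fnsub r1 q qK) /Fn qK; case: ifP => // _.
    case: (NkP q qK) => _ -> _ h; exfalso.
    by move: (lt_le_trans an_lt h); rewrite ltxx.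
  rewrite -(ler_nat R) => h; move: (le_lt_trans (le_trans Hl h) an_lt).
  by rewrite ltxx.
rewrite /fire Sumn; apply: le_trans Hfp _; rewrite Sump.
have -> : \sum_(q in K) \sum_(d in Fp q) a d = \sum_(q in Q) p q.
  rewrite [RHS](_ : _ = \sum_(q in K | q \in Q) p q); last first.
    by apply: eq_bigl => q; case qQ: (q \in Q); rewrite ?(subsetP QK q qQ) ?andbF.
  by rewrite big_mkcondr /=; apply: eq_bigr => q _; rewrite /Fp; case: ifP; rewrite ?big_set0.
have -> : \sum_(q in K) \sum_(d in Fn q) a d =
    \sum_(q in K) nq q + \sum_(q in A) (Wq q - nq q).
  rewrite [X in _ + X](_ : _ = \sum_(q in K | q \in A) (Wq q - nq q)); last first.
    by apply: eq_bigl => q; case qA: (q \in A); rewrite ?(subsetP AK q qA) ?andbF.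
  rewrite big_mkcondr -big_split /=; apply: eq_bigr => q qK.
  rewrite /Fn qK; case: ifP => _; last by rewrite addr0.
  by rewrite addrC subrK.
have hP : k%:R * \sum_(q in K) p q <= bn%:R * \sum_(q in K) Wq q.
  rewrite !mulr_sumr; apply: ler_sum => q qK; by case: (PkP q qK).
apply: (@final_ineq R k%:R an%:R bn%:R (\sum_(q in K) Wq q) _ _ _ (\sum_(q in K) p q)) => //.
- by rewrite ler_nat.
- by apply: sumr_ge0 => q _; apply: sumr_ge0.
- rewrite !mulr_sumr; apply: ler_sum => q qK; by case: (NkP q qK).
- by rewrite -sumrB.
Qed.
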